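(* Let $V$ be a vector space of dimension $n$ over a field, and let $g_1,\dots,g_{n+1}\in\mathrm{GL}(V)$ satisfy $\operatorname{rank}(g_i-1)\le 1$ for all $i$ and $g_1\cdots g_{n+1}=\mu\cdot\mathrm{id}_V$ for a scalar $\mu$. If $\mu\ne 1$ and $\mu$ is not an eigenvalue of any $g_i$, then each $g_i$ is a pseudoreflection and the group generated by $g_1,\dots,g_{n+1}$ acts irreducibly on $V$.
   Context: An element $g\in\mathrm{GL}(V)$ is a pseudoreflection if $\operatorname{rank}(g-1)=1$. *)

(* Defs.v *)
From mathcomp Require Import all_boot all_order all_algebra.
Set Implicit Arguments. Unset Strict Implicit. Unset Printing Implicit Defensive.
Import GRing.Theory.
Local Open Scope ring_scope.

(* Elements of GL(V), V = 'rV[F]_n, are invertible n x n matrices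
   (MathComp row-vector convention). *)

Inductive gen_group (F : fieldType) (n : nat) (I : Type) (g : I -> 'M[F]_n)
  : 'M[F]_n -> Prop :=
| gen_one : gen_group g 1%:M
| gen_gen : forall i, gen_group g (g i)
| gen_mul : forall a b, gen_group g a -> gen_group g b -> gen_group g (a *m b)
| gen_inv : forall a, gen_group g a -> gen_group g (invmx a).

Definition acts_irreducibly (F : fieldType) (n : nat) (G : 'M[F]_n -> Prop) : Prop :=
  (0 < n)%N /\
  forall W : 'M[F]_n, (forall h, G h -> stablemx W h) ->
    W == 0 :> 'M[F]_n \/ row_full W.

Definition pseudoreflection (F : fieldType) (n : nat) (h : 'M[F]_n) : Prop :=
  h \in unitmx /\ \rank (h - 1%:M) = 1%N.

(* Main.v *)
Require Import Defs.
From mathcomp Require Import all_boot all_order all_algebra.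
From mathcomp Require Import zify.
Set Implicit Arguments. Unset Strict Implicit. Unset Printing Implicit Defensive.
Import GRing.Theory.
Local Open Scope ring_scope.
Lemma core (F : fieldType) n N (G : nat -> 'M[F]_n) (mu : F) (U X : 'M[F]_n)
  (v : 'rV[F]_n) m :
  (m < N)%N ->
  (forall i, stablemx U (G i)) ->
  (forall i, stablemx X (G i)) ->
  (forall i, (m < i < N)%N -> (X *m (G i - 1) <= U)%MS) ->
  (v <= X)%MS ->
  (forall i, (i < m)%N -> (v *m (G i - 1) <= U)%MS) ->
  \prod_(0 <= i < N) G i = mu%:M ->
  G m - mu%:M \in unitmx ->
  (v <= U)%MS.
Proof.
move=> ltmN sU sX hX vX hv hP hu.
have pre : forall k, (k <= m)%N -> (v *m \prod_(0 <= i < k) G i - v <= U)%MS.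
  elim=> [|k IH] hk; first by rewrite big_nil mulmx1 subrr sub0mx.
  rewrite big_nat_recr //=.
  have -> : v *m ((\prod_(0 <= i < k) G i) * G k) - v
     = (v *m \prod_(0 <= i < k) G i - v) *m G k + v *m (G k - 1).
    by rewrite mulmxBl mulmxBr mulmx1 mulmxA addrA subrK.
  apply: addmx_sub; last exact: hv.
  exact: submx_trans (submxMr _ (IH (ltnW hk))) (sU k).
have post : forall k, (m < k <= N)%N ->
    (v *m \prod_(0 <= i < k) G i - v *m G m <= U)%MS.
  elim=> [|k IH] //; rewrite ltnS => /andP[hmk hkN].
  rewrite big_nat_recr //=.
  move: hmk; rewrite leq_eqVlt => /orP[/eqP <-|hmk].
    have -> : v *m ((\prod_(0 <= i < m) G i) * G m) - v *m G m
       = (v *m \prod_(0 <= i < m) G i - v) *m G m.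
      by rewrite mulmxBl mulmxA.
    exact: submx_trans (submxMr _ (pre m (leqnn m))) (sU m).
  have -> : v *m ((\prod_(0 <= i < k) G i) * G k) - v *m G m
     = (v *m \prod_(0 <= i < k) G i - v *m G m) *m G k + (v *m G m) *m (G k - 1).
    by rewrite mulmxBl mulmxBr mulmx1 mulmxA addrA subrK.
  apply: addmx_sub.
    apply: submx_trans (submxMr _ (IH _)) (sU k).
    by rewrite hmk (ltnW hkN).
  apply: submx_trans (hX k _); last by rewrite hmk.
  apply: submxMr; exact: submx_trans (submxMr _ vX) (sX m).
have := post N; rewrite ltmN leqnn hP => /(_ isT).
rewrite mul_mx_scalar => H1.
have H2 : (v *m (G m - mu%:M) <= U)%MS.
  rewrite -eqmx_opp; move: H1.
  by rewrite mulmxBr mul_mx_scalar opprB.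
have sUC : (U *m (G m - mu%:M) <= U)%MS.
  rewrite mulmxBr mul_mx_scalar addmx_sub ?eqmx_opp ?scalemx_sub //.
have fr : row_free (G m - mu%:M) by rewrite row_free_unit.
have eqU : (U *m (G m - mu%:M) == U)%MS.
  by rewrite -(mxrank_leqif_eq sUC) mxrankMfree.
rewrite -(submxMfree _ _ fr).
exact: submx_trans H2 (proj2 (andP eqU)).
Qed.
Lemma count_vec (F : fieldType) n (X U : 'M[F]_n) (A : nat -> 'M[F]_n) (l : seq nat) :
  (forall i, (\rank (A i) <= 1)%N) -> (\rank U + size l < \rank X)%N ->
  exists v : 'rV[F]_n, [/\ (v <= X)%MS, ~~ (v <= U)%MS &
     forall i, i \in l -> (v *m A i <= U)%MS].
Proof.
move=> hA hr.
pose Yf l := foldr (fun i Y => (Y :&: kermx (A i *m cokermx U))%MS) X l.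
have YX : forall l, (Yf l <= X)%MS.
  elim => [|i l' IH] /=; first exact: submx_refl.
  exact: submx_trans (capmxSl _ _) IH.
have Yl : forall l i, i \in l -> (Yf l *m A i <= U)%MS.
  elim=> [|j l' IH] //= i; rewrite in_cons => /orP[/eqP ->|il].
    by rewrite submxE -mulmxA -sub_kermx capmxSr.
  apply: submx_trans (IH i il); apply: submxMr; exact: capmxSl.
have rY : forall l, (\rank X <= \rank (Yf l) + size l)%N.
  elim => [|i l' IH]; first by rewrite /= addn0.
  rewrite [Yf _]/= [size _]/=.
  set Y := Yf l'.
  set K := kermx (A i *m cokermx U).
  have e := mxrank_sum_cap Y K.
  have r1 : (\rank (Y + K)%MS <= n)%N by apply: rank_leq_col.
  have r2 : (\rank (A i *m cokermx U) <= 1)%N.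
    exact: leq_trans (mxrankM_maxl _ _) (hA i).
  have r3 := mxrank_ker (A i *m cokermx U).
  rewrite -/K in r3. rewrite -/Y in IH. clearbody Y K. lia.
have nYU : ~~ (Yf l <= U)%MS.
  apply/negP => /mxrankS; have := rY l; lia.
have [i ni] := row_subPn nYU.
exists (row i (Yf l)); split => //.
  exact: submx_trans (row_sub _ _) (YX l).
move=> j jl; exact: submx_trans (submxMr _ (row_sub _ _)) (Yl l j jl).
Qed.

Lemma sorted_last (l : seq nat) m x : sorted ltn (rcons l m) -> x \in l -> (x < m)%N.
Proof.
rewrite -rev_sorted rev_rcons /= => /(order_path_min (rev_trans ltn_trans)) /allP H.
by move=> xl; apply: (H x); rewrite mem_rev.
Qed.

Lemma gen (F : fieldType) n (G : nat -> 'M[F]_n) (mu : F) (U X : 'M[F]_n) :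
  (forall i, (\rank (G i - 1%:M)%R <= 1)%N) ->
  \prod_(0 <= i < n.+1) G i = mu%:M ->
  (forall i, G i - mu%:M \in unitmx) ->
  (forall i, stablemx U (G i)) -> (forall i, stablemx X (G i)) ->
  (\rank U < \rank X)%N ->
  (\rank X < \rank U + size [seq i <- iota 0 n.+1 | ~~ (X *m (G i - 1%:M) <= U)%MS])%N.
Proof.
move=> hr hP hu sU sX hUX.
set P := [seq i <- _ | _].
rewrite ltnNge; apply/negP => hle.
have notP : forall i, (i < n.+1)%N -> i \notin P -> (X *m (G i - 1%:M) <= U)%MS.
  by move=> i hi; rewrite mem_filter mem_iota /= hi andbT negbK.
have inP : forall i, i \in P -> (i < n.+1)%N.
  by move=> i; rewrite mem_filter mem_iota /= => /andP[_ ->].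
have sP : sorted ltn P.
  exact: sorted_filter ltn_trans _ _ (iota_ltn_sorted 0 n.+1).
have H : P = [::] \/ exists l m, P = rcons l m.
  by case: (lastP P) => [|l m]; [left | right; exists l, m].
case: H => [E|[l [m E]]].
  have [v [vX vU _]] := @count_vec F n X U (fun i => G i - 1%:M) [::] hr
    ltac:(rewrite addn0; exact: hUX).
  apply: (negP vU); apply: (@core F n n.+1 G mu U X v n) => //.
  - by move=> i /andP[h1 h2]; move: (leq_trans h1 h2); rewrite ltnn.
  - move=> i hi; apply: submx_trans (submxMr _ vX) (notP i _ _).
      exact: ltnW.
    by rewrite E.
have hsz : size P = (size l).+1 by rewrite E size_rcons.
have [v [vX vU vl]] := @count_vec F n X U (fun i => G i - 1%:M) l hr
    ltac:(rewrite hsz in hle; lia).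
have mP : m \in P by rewrite E mem_rcons mem_head.
have lt : forall i, i \in P -> i != m -> (i < m)%N /\ i \in l.
  move=> i; rewrite E mem_rcons in_cons => /orP[/eqP -> |il]; first by rewrite eqxx.
  by move=> _; split => //; apply: (sorted_last (l:=l)); rewrite -?E.
apply: (negP vU); apply: (@core F n n.+1 G mu U X v m) => //.
- exact: inP.
- move=> i /andP[h1 h2]; apply: notP => //; apply/negP => iP.
  have [h3 _] := lt i iP ltac:(by rewrite neq_ltn h1 orbT).
  by move: (ltn_trans h1 h3); rewrite ltnn.
- move=> i him.
  have hi : (i < n.+1)%N by apply: ltn_trans him (inP m mP).
  case: (boolP (i \in P)) => iP.
    have [_ il] := lt i iP ltac:(by rewrite neq_ltn him).
    exact: vl.
  exact: submx_trans (submxMr _ vX) (notP i hi iP).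
Qed.

Theorem mainTheorem3 (F : fieldType) (n : nat) (hn : (0 < n)%N)
  (g : 'I_n.+1 -> 'M[F]_n) (mu : F) :
  (forall i, g i \in unitmx) ->
  (forall i, (\rank (g i - 1%:M)%R <= 1)%N) ->
  \big[mulmx/1%:M]_(i < n.+1) g i = mu%:M ->
  mu != 1 ->
  (forall i, ~~ eigenvalue (g i) mu) ->
  (forall i, pseudoreflection (g i)) /\ acts_irreducibly (gen_group g).
Proof.
move=> hu hr hP hmu hev.
pose G i := g (inord i).
have GE : forall i : 'I_n.+1, G i = g i by move=> i; rewrite /G inord_val.
have hP' : \prod_(0 <= i < n.+1) G i = mu%:M.
  rewrite big_mkord; under eq_bigr do rewrite GE; exact: hP.
have hr' : forall i, (\rank (G i - 1%:M)%R <= 1)%N by move=> i; exact: hr.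
have hunit : forall i, G i - mu%:M \in unitmx.
  move=> i; rewrite -row_free_unit -kermx_eq0.
  by have := hev (inord i); rewrite /eigenvalue /eigenspace /= negbK.
have s0 : forall i, stablemx (0 : 'M[F]_n) (G i) by move=> i; rewrite mul0mx sub0mx.
have s1 : forall i, stablemx (1%:M : 'M[F]_n) (G i) by move=> i; exact: submx1.
have cnt : forall (a : pred nat), (size [seq i <- iota 0 n.+1 | a i] <= n.+1)%N.
  by move=> a; rewrite size_filter; apply: leq_trans (count_size _ _) _; rewrite size_iota.
split.
  have := gen hr' hP' hunit s0 s1; rewrite mxrank0 mxrank1 add0n => /(_ hn) h.
  set a := (fun i => _) in h.
  have hall : all a (iota 0 n.+1).
    rewrite all_count; rewrite size_filter in h.
    have := count_size a (iota 0 n.+1); rewrite size_iota.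
    move=> h2; apply/eqP; lia.
  move=> i; split; first exact: hu.
  have := allP hall i; rewrite mem_iota /= ltn_ord => /(_ isT).
  rewrite /a mul1mx submx0 -mxrank_eq0 GE.
  by have := hr i; case: (\rank _) => [|[|]].
split; first exact: hn.
move=> W hW.
have sW : forall i, stablemx W (G i) by move=> i; apply: hW; exact: gen_gen.
have [W0|W0] := eqVneq W 0; first by left.
right; case: (boolP (row_full W)) => // nf; exfalso.
have rW : (0 < \rank W < n)%N.
  rewrite lt0n mxrank_eq0 W0 /= ltn_neqAle rank_leq_col andbT.
  exact: nf.
have := gen hr' hP' hunit s0 sW; rewrite mxrank0 add0n => /(_ ltac:(by case/andP: rW)) h1.
have := gen hr' hP' hunit sW s1; rewrite mxrank1 => /(_ ltac:(by case/andP: rW)) h2.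
set a1 := (fun i => _) in h1.
set a2 := (fun i => _) in h2.
have disj : forall i, a1 i -> a2 i -> False.
  move=> i; rewrite /a1 /a2 mul1mx submx0 => A0 /negP; apply.
  set A := G i - 1%:M in A0 *.
  have sWA : (W *m A <= W)%MS.
    by rewrite /A mulmxBr mulmx1 addmx_sub ?eqmx_opp ?submx_refl ?sW.
  apply: submx_trans sWA.
  have := mxrank_leqif_sup (submxMl W A); case=> _ <-.
  have : (\rank (W *m A) != 0)%N by rewrite mxrank_eq0.
  have := hr' i; rewrite -/A.
  have := mxrankM_maxr W A.
  move=> x y z; apply/eqP; lia.
rewrite !size_filter in h1 h2.
have := count_predUI a1 a2 (iota 0 n.+1).
have -> : count (predI a1 a2) (iota 0 n.+1) = 0%N.
  apply/eqP; rewrite -leqn0 leqNgt -has_count; apply/hasPn => i _ /=.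
  by apply/negP => /andP[x y]; exact: disj x y.
have := count_size (predU a1 a2) (iota 0 n.+1); rewrite size_iota.
lia.
Qed.
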